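(* Let $\mathcal{A}$ be an uncountable almost disjoint family of infinite subsets of $\omega$ and let $\mathcal{I}$ be an ideal. The following are equivalent: (a) $\Phi(\mathcal{A})$ is in $\mathrm{FinBW}(\mathcal{I})$; (b) for every $f\in\mathcal{D}_{\mathcal{I}}$ there is $B\notin\mathcal{I}$ such that $f|B$ is finite-to-one and $f[B]\in\mathrm{Fin}^2(\mathcal{A})$.
   Context: An ideal on an infinite countable set $X$ is a family $\mathcal{I}\subseteq\mathcal{P}(X)$ closed under subsets and finite unions, containing all finite subsets, with $X\notin\mathcal{I}$. A space $X$ is in $\mathrm{FinBW}(\mathcal{I})$ if $X$ is Hausdorff and for every sequence $(x_n)_{n\in\bigcup\mathcal{I}}$ in $X$ there is $A\notin\mathcal{I}$ with $(x_n)_{n\in A}$ convergent in $X$. $\mathcal{D}_{\mathcal{I}}$ is the set of functions $f:\bigcup\mathcal{I}\to\omega$ with $f^{-1}[\{n\}]\in\mathcal{I}$ for all $n$. For an almost disjoint family $\mathcal{A}$ (infinite subsets of $\omega$ with pairwise finite intersections), $\mathrm{Fin}^2(\mathcal{A})$ is the ideal on $\omega$ generated by the members of $\mathcal{A}$ together with all sets having finite intersection with every member of $\mathcal{A}$. $\Phi(\mathcal{A})$ is the space on $\omega\cup\mathcal{A}\cup\{\infty\}$ with points of $\omega$ isolated, basic neighbourhoods of $A\in\mathcal{A}$ of the form $\{A\}\cup(A\setminus F)$ ($F\subseteq\omega$ finite) and of $\infty$ of the form $\{\infty\}\cup(\mathcal{A}\setminus G)\cup(\omega\setminus(F\cup\bigcup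 G))$ ($F\subseteq\omega$, $G\subseteq\mathcal{A}$ finite). *)

(* Defs.v *)
From HB Require Import structures.
From mathcomp Require Import all_boot all_order.
From mathcomp Require Import boolp classical_sets functions cardinality.
From mathcomp Require Import topology.
Set Implicit Arguments. Unset Strict Implicit. Unset Printing Implicit Defensive.
Local Open Scope classical_set_scope.

(** Since it contains all finite sets,
    \bigcup I = [set: X]. *)
Definition ideal (X : Type) (I : set (set X)) : Prop :=
  [/\ (forall B C, I C -> B `<=` C -> I B),
      (forall B C, I B -> I C -> I (B `|` C)),
      (forall F, finite_set F -> I F) &
      ~ I setT].

Definition subseq_converges (X : Type) (T : topologicalType)
  (s : X -> T) (B : set X) (x : T) : Prop :=
  forall U, nbhs x U -> finite_set (B `&` [set n | ~ U (s n)]).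

Definition FinBW (X : Type) (I : set (set X)) (T : topologicalType) : Prop :=
  hausdorff_space T /\
  forall s : X -> T, exists B, ~ I B /\ exists x : T, subseq_converges s B x.

Definition D_ideal (X : Type) (I : set (set X)) (f : X -> nat) : Prop :=
  forall n, I (f @^-1` [set n]).

Definition finite_to_one_on (X : Type) (B : set X) (f : X -> nat) : Prop :=
  forall n, finite_set (B `&` f @^-1` [set n]).

Definition almost_disjoint (A : set (set nat)) : Prop :=
  (forall B, A B -> infinite_set B) /\
  (forall B C, A B -> A C -> B <> C -> finite_set (B `&` C)).

Definition Fin2_gen (A : set (set nat)) (S : set nat) : Prop :=
  A S \/ (forall B, A B -> finite_set (S `&` B)).

Definition Fin2 (A : set (set nat)) (S : set nat) : Prop :=
  exists s : seq (set nat), (forall G, G \in s -> Fin2_gen A G) /\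
    S `<=` \big[setU/set0]_(G <- s) G.

Inductive Phi_pt (A : set (set nat)) : Type :=
| PhiN of nat
| PhiA of {B : set nat | A B}
| PhiInf.

HB.instance Definition _ A := gen_eqMixin (Phi_pt A).
HB.instance Definition _ A := gen_choiceMixin (Phi_pt A).
HB.instance Definition _ A := isPointed.Build (Phi_pt A) (PhiInf A).

Definition Phi_basic (A : set (set nat)) (U : set (Phi_pt A)) : Prop :=
  (exists n : nat, U = [set PhiN A n]) \/
  (exists (B : {B : set nat | A B}) (F : set nat), finite_set F /\
     U = [set PhiA B] `|` [set PhiN A n | n in proj1_sig B `\` F]) \/
  (exists (F : set nat) (G : set (set nat)),
     [/\ finite_set F, finite_set G, G `<=` A &
     U = [set PhiInf A]
         `|` [set PhiA C | C in [set C : {C : set nat | A C} | ~ G (proj1_sig C)]]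
         `|` [set PhiN A n | n in [set n | ~ F n /\ forall C, G C -> ~ C n]]]).

Definition Phi (A : set (set nat)) : Type := Phi_pt A.
HB.instance Definition _ A := Choice.on (Phi A).
HB.instance Definition _ A := Pointed.on (Phi A).
HB.instance Definition _ A :=
  isSubBaseTopological.Build (Phi A) (@Phi_basic A) id.

(* Main.v *)
Require Import Defs.
From HB Require Import structures.
From mathcomp Require Import all_boot all_order.
From mathcomp Require Import boolp classical_sets functions cardinality.
From mathcomp Require Import topology.
From mathcomp Require Import finmap.
Set Implicit Arguments. Unset Strict Implicit. Unset Printing Implicit Defensive.
Local Open Scope classical_set_scope.

Section S.
Variable A : set (set nat).

Lemma basic_nbhs (V : set (Phi A)) (x : Phi A) : Phi_basic V -> V x -> nbhs x V.
Proof.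
move=> bV Vx; exists V; split => //.
exists [set V]; last by rewrite bigcup_set1.
move=> W ->; exists [fset V]%fset; last by rewrite set_fset1 bigcap_set1.
move=> z; rewrite !inE => /eqP ->. exact/mem_set.
Qed.

Lemma conv_basic (X : Type) (s : X -> Phi A) (B : set X) (x : Phi A) :
  (forall V, Phi_basic V -> V x -> finite_set (B `&` [set n | ~ V (s n)])) ->
  subseq_converges s B x.
Proof.
move=> H U [O [[D' sD' <-] [W D'W Wx] OU]].
have [F sF WF] := sD' W D'W.
apply: (@sub_finite_set _ _ (\bigcup_(V in [set` F]) (B `&` [set n | ~ V (s n)]))).
  move=> n [Bn nU]; apply: contrapT => Hn; apply: nU; apply: OU; exists W => //; rewrite /=.
  rewrite -WF => V FV; apply: contrapT => nV; apply: Hn; exists V => //.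
apply: bigcup_finite; first exact: finite_fset.
move=> V FV; apply: H; first exact/set_mem/sF.
by move: Wx; rewrite -WF; apply.
Qed.

Definition NbA (b : {B : set nat | A B}) (F : set nat) : set (Phi A) :=
  [set PhiA b] `|` [set PhiN A n | n in proj1_sig b `\` F].
Definition NbI (F : set nat) (G : set (set nat)) : set (Phi A) :=
  [set PhiInf A]
  `|` [set PhiA C | C in [set C : {C : set nat | A C} | ~ G (proj1_sig C)]]
  `|` [set PhiN A n | n in [set n | ~ F n /\ forall C, G C -> ~ C n]].

Lemma NbA_basic b F : finite_set F -> Phi_basic (NbA b F).
Proof. by move=> fF; right; left; exists b, F. Qed.

Lemma NbI_basic F G : finite_set F -> finite_set G -> G `<=` A ->
  Phi_basic (NbI F G).
Proof. by move=> fF fG GA; right; right; exists F, G. Qed.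

Lemma N_basic n : Phi_basic [set PhiN A n].
Proof. by left; exists n. Qed.

Lemma NbA_N b F n : NbA b F (PhiN A n) <-> proj1_sig b n /\ ~ F n.
Proof.
split; first by case=> [//|[k [bk Fk] [<-]]].
by move=> [bn Fn]; right; exists n.
Qed.

Lemma NbA_A b F c : NbA b F (PhiA c) <-> c = b.
Proof.
split; first by case=> [[->]//|[k _ //]].
by move=> ->; left.
Qed.

Lemma NbA_I b F : ~ NbA b F (PhiInf A).
Proof. by case=> [//|[k _ //]]. Qed.

Lemma NbI_N F G n : NbI F G (PhiN A n) <-> ~ F n /\ forall C, G C -> ~ C n.
Proof.
split; first by case=> [[//|[C _ //]]|[k Hk [<-]]].
by move=> H; right; exists n.
Qed.

Lemma NbI_A F G c : NbI F G (PhiA c) <-> ~ G (proj1_sig c).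
Proof.
split; first by case=> [[//|[C HC [<-]]]|[k _ //]].
by move=> H; left; right; exists c.
Qed.

Lemma NbI_I F G : NbI F G (PhiInf A).
Proof. by left; left. Qed.

Lemma sig_eqP (b c : {B : set nat | A B}) : proj1_sig b = proj1_sig c -> b = c.
Proof.
case: b c => [b Hb] [c Hc] /= bc; subst c.
by congr exist; apply: Prop_irrelevance.
Qed.

Lemma basic_I V : Phi_basic V -> V (PhiInf A) ->
  exists F G, [/\ finite_set F, finite_set G, G `<=` A & V = NbI F G].
Proof.
case=> [[n ->] //|[[b [F [_ ->]]] /NbA_I //|[F [G [fF fG GA ->]]] _]].
by exists F, G.
Qed.

Lemma basic_A V c : Phi_basic V -> V (PhiA c) ->
  (exists F, finite_set F /\ V = NbA c F) \/
  (exists F G, [/\ finite_set F, finite_set G, G `<=` A, V = NbI F G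
     & ~ G (proj1_sig c)]).
Proof.
case=> [[n ->] //|[[b [F [fF ->]]] /NbA_A ->|[F [G [fF fG GA ->]]] /NbI_A nG]].
  by left; exists F.
by right; exists F, G.
Qed.

Definition sepP (p q : Phi A) := exists U V,
  [/\ Phi_basic U, U p, Phi_basic V, V q & forall z, U z -> V z -> False].

Lemma sepC p q : sepP p q -> sepP q p.
Proof.
by move=> [U [V [bU Up bV Vq H]]]; exists V, U; split => // z Vz Uz; apply: (H z).
Qed.

Lemma sep_all (adA : almost_disjoint A) p q : p <> q -> sepP p q.
Proof.
have NN m m' : m <> m' -> sepP (PhiN A m) (PhiN A m').
  move=> mm'; exists [set PhiN A m], [set PhiN A m']; split => //; try exact: N_basic.
  by move=> z -> [/mm'].
have NA m b : sepP (PhiN A m) (PhiA b).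
  exists [set PhiN A m], (NbA b [set m]); split => //.
  - exact: N_basic.
  - by apply: NbA_basic; exact: finite_set1.
  - by apply/NbA_A.
  - by move=> z -> /NbA_N [_]; apply.
have NI m : sepP (PhiN A m) (PhiInf A).
  exists [set PhiN A m], (NbI [set m] set0); split => //.
  - exact: N_basic.
  - by apply: NbI_basic; [exact: finite_set1|exact: finite_set0|].
  - exact: NbI_I.
  - by move=> z -> /NbI_N [H _]; apply: H.
have AA a b : a <> b -> sepP (PhiA a) (PhiA b).
  move=> ab; exists (NbA a (proj1_sig a `&` proj1_sig b)), (NbA b set0); split.
  - apply: NbA_basic; case: adA => _; apply; [exact: (proj2_sig a)|exact: (proj2_sig b)|].
    by move/sig_eqP.
  - by apply/NbA_A.
  - by apply: NbA_basic; exact: finite_set0.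
  - by apply/NbA_A.
  - case=> [n|c|] /=.
    + by move=> /NbA_N [an H] /NbA_N [bn _]; apply: H.
    + by move=> /NbA_A -> /NbA_A.
    + by move=> /NbA_I.
have AI a : sepP (PhiA a) (PhiInf A).
  exists (NbA a set0), (NbI set0 [set proj1_sig a]); split.
  - by apply: NbA_basic; exact: finite_set0.
  - by apply/NbA_A.
  - apply: NbI_basic; [exact: finite_set0|exact: finite_set1|].
    by move=> C ->; exact: (proj2_sig a).
  - exact: NbI_I.
  - case=> [n|c|] /=.
    + by move=> /NbA_N [an _] /NbI_N [_ H]; apply: (H (proj1_sig a)).
    + by move=> /NbA_A -> /NbI_A; apply.
    + by move=> /NbA_I.
case: p => [m|a|]; case: q => [m'|b|] pq.
- by apply: NN => mm'; apply: pq; rewrite mm'.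
- exact: NA.
- exact: NI.
- exact/sepC/NA.
- by apply: AA => ab; apply: pq; rewrite ab.
- exact: AI.
- exact/sepC/NI.
- exact/sepC/AI.
- by [].
Qed.

Lemma Phi_hausdorff (adA : almost_disjoint A) : hausdorff_space (Phi A).
Proof.
move=> p q clpq; apply: contrapT => /(sep_all adA) [U [V [bU Up bV Vq H]]].
have [z [Uz Vz]] := clpq U V (basic_nbhs bU Up) (basic_nbhs bV Vq).
exact: (H z).
Qed.

Lemma a_to_b (X : Type) (I : set (set X)) : ideal I -> FinBW I (Phi A) ->
  forall f : X -> nat, D_ideal I f ->
      exists B : set X, ~ I B /\ finite_to_one_on B f /\ Fin2 A (f @` B).
Proof.
move=> [Isub IU Ifin IT] [_ FB] f Df.
have [B [IB [x cx]]] := FB (fun n => PhiN A (f n)).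
exists B; split => //.
case: x cx => [m|a|] cx.
- exfalso; apply: IB.
  have fE := cx _ (basic_nbhs (N_basic m) erefl).
  apply: (Isub _ (f @^-1` [set m] `|` (B `&` [set n | ~ [set PhiN A m] (PhiN A (f n))]))).
    by apply: (IU); [exact: Df|exact: Ifin].
  move=> n Bn; have [fnm|fnm] := pselect (f n = m); [left|right] => //.
  by split => // -[].
- split.
  + move=> k.
    have := cx _ (basic_nbhs (NbA_basic a (finite_set1 k)) (proj2 (NbA_A _ _ _) erefl)).
    apply: sub_finite_set => n [Bn fnk]; split => //= /NbA_N [_]; apply; exact: fnk.
  + set E := B `&` [set n | ~ NbA a set0 (PhiN A (f n))].
    have fE : finite_set E.
      apply: (cx (NbA a set0)); apply: basic_nbhs; first exact: NbA_basic (finite_set0 _).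
      by apply/NbA_A.
    exists [:: proj1_sig a; f @` E]; split.
      move=> G; rewrite !in_cons in_nil orbF => /orP [/eqP -> | /eqP ->].
        left; exact: (proj2_sig a).
      by right => C _; apply: finite_setIl; exact: finite_image.
    move=> _ [n Bn <-]; rewrite !big_cons big_nil.
    have [an|an] := pselect (proj1_sig a (f n)); [left|right; left] => //.
    by exists n => //; split => // /NbA_N [].
- split.
  + move=> k.
    have := cx _ (basic_nbhs (NbI_basic (finite_set1 k) (finite_set0 _) (sub0set _)) (NbI_I _ _)).
    apply: sub_finite_set => n [Bn fnk]; split => //= /NbI_N [H _]; apply: H; exact: fnk.
  + exists [:: f @` B]; split.
      move=> G; rewrite !in_cons in_nil orbF => /eqP ->; right => C AC.
      have fE := cx _ (basic_nbhs (NbI_basic (finite_set0 _) (finite_set1 C)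
                                    (fun C' (e : C' = C) => ltac:(rewrite e; exact: AC)))
                                  (NbI_I _ _)).
      apply: (sub_finite_set _ (finite_image f fE)).
      move=> k [[n Bn <-] Cfn]; exists n => //; split => // /NbI_N [_ H].
      exact: H C erefl Cfn.
    by move=> k Bk; rewrite big_cons big_nil; left.
Qed.

Lemma split_notI (X : Type) (I : set (set X)) : ideal I ->
  forall B C D, ~ I B -> B `<=` C `|` D -> ~ I C \/ ~ I D.
Proof.
move=> [Isub IU _ _] B C D IB BCD; apply: contrapT => /not_orP [/contrapT IC /contrapT ID].
by apply: IB; apply: (Isub _ _ (IU _ _ IC ID)).
Qed.

Lemma pick_gen (X : Type) (I : set (set X)) (f : X -> nat) : ideal I ->
  forall (l : seq (set nat)) B, ~ I B -> f @` B `<=` \big[setU/set0]_(G <- l) G ->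
  exists G, G \in l /\ ~ I (B `&` f @^-1` G).
Proof.
move=> Iid; elim=> [|G l IH] B IB sB.
  exfalso; apply: IB; case: Iid => Isub _ Ifin _; apply: (Isub _ set0); first exact: Ifin (finite_set0 _).
  by move=> n Bn; have := sB (f n) (ex_intro2 _ _ n Bn erefl); rewrite big_nil.
have sBCD : B `<=` (B `&` f @^-1` G) `|` (B `&` f @^-1` (\big[setU/set0]_(G <- l) G)).
  move=> n Bn; have := sB (f n) (ex_intro2 _ _ n Bn erefl); rewrite big_cons.
  by case=> H; [left|right].
have [IG|IR] := split_notI Iid IB sBCD.
- by exists G; split => //; rewrite in_cons eqxx.
  have sR : f @` (B `&` f @^-1` (\big[setU/set0]_(G <- l) G)) `<=` \big[setU/set0]_(G <- l) G.
    by move=> _ [n [Bn H] <-].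
  have [G' [G'l IG']] := IH _ IR sR.
  exists G'; split; first by rewrite in_cons G'l orbT.
  move=> IG; apply: IG'; case: Iid => Isub _ _ _; apply: (Isub _ _ IG) => n [[]] //.
Qed.

Lemma fin_bad (X : Type) (s : X -> Phi A) (f : X -> nat) (B : set X) (E : set nat)
  (V : set (Phi A)) : finite_to_one_on B f -> finite_set E ->
  (forall n, B n -> ~ V (s n) -> E (f n)) ->
  finite_set (B `&` [set n | ~ V (s n)]).
Proof.
move=> fto fE H.
apply: (@sub_finite_set _ _ (\bigcup_(k in E) (B `&` f @^-1` [set k]))).
  by move=> n [Bn nV]; exists (f n); [exact: H|].
by apply: bigcup_finite => // k _; exact: fto.
Qed.

Lemma b_to_a (X : countType) (I : set (set X)) : almost_disjoint A -> ideal I ->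
  (forall f : X -> nat, D_ideal I f ->
      exists B : set X, ~ I B /\ finite_to_one_on B f /\ Fin2 A (f @` B)) ->
  FinBW I (Phi A).
Proof.
move=> adA Iid Hb; have [Isub IU Ifin IT] := Iid.
split; first exact: Phi_hausdorff.
move=> s.
have [[x Hx]|allI] := pselect (exists x, ~ I (s @^-1` [set x])).
  exists (s @^-1` [set x]); split => //; exists x => U Ux.
  apply: (sub_finite_set _ (finite_set0 X)) => n [sx nU]; apply: nU; rewrite sx.
  exact: nbhs_singleton Ux.
have fibI x : I (s @^-1` [set x]) by apply: contrapT => H; apply: allI; exists x.
have ex_ge (a : {B : set nat | A B}) k : exists m, proj1_sig a m /\ k <= m.
  apply: contrapT => H; apply: (adA.1 _ (proj2_sig a)).
  apply: (sub_finite_set _ (finite_II k)) => m am /=; rewrite ltnNge.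
  by apply/negP => km; apply: H; exists m.
pose g (a : {B : set nat | A B}) k := xget 0 [set m | proj1_sig a m /\ k <= m].
have gP a k : proj1_sig a (g a k) /\ k <= g a k := xgetPex 0 (ex_ge a k).
pose f n := match s n with PhiN m => m | PhiA a => g a (choice.pickle n) | PhiInf => 0 end.
have fN n m : s n = PhiN A m -> f n = m by rewrite /f => ->.
have fA n a : s n = PhiA a -> proj1_sig a (f n) by rewrite /f => ->; exact: (gP a _).1.
have Df : D_ideal I f.
  move=> k; apply: (Isub _ (s @^-1` [set PhiN A k] `|` s @^-1` [set PhiInf A]
                              `|` choice.pickle @^-1` [set m | m <= k])).
    apply: (IU); first by apply: (IU); exact: fibI.
    apply: (Ifin); apply: finite_preimage; first by move=> x y _ _; exact: (pcan_inj pickleK_inv).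
    by apply: (sub_finite_set _ (finite_II k.+1)).
  move=> n; rewrite /preimage /= /f; case E: (s n) => [m|a|] /= fnk.
  - by left; left; rewrite fnk.
  - by right; rewrite -fnk; exact: (gP a _).2.
  - by left; right.
have [B [IB [ftoB [l [gl fBl]]]]] := Hb f Df.
pose B1 := B `&` [set n | s n <> PhiInf A].
have IB1 : ~ I B1.
  have sub : B `<=` B1 `|` s @^-1` [set PhiInf A].
    by move=> n Bn; have [sn|sn] := pselect (s n = PhiInf A); [right|left].
  have [//|] := split_notI Iid IB sub.
  by move=> H; exfalso; apply: H; exact: fibI.
have sB1 : f @` B1 `<=` \big[setU/set0]_(G <- l) G.
  by move=> _ [n [Bn _] <-]; apply: fBl; exists n.
have [G [Gl IB2]] := pick_gen Iid IB1 sB1.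
pose B2 := B1 `&` f @^-1` G.
have fto2 : finite_to_one_on B2 f.
  by move=> k; apply: sub_finite_set (ftoB k) => n [[[Bn _] _] fk].
have B2G n : B2 n -> G (f n) by case.
have B2I n : B2 n -> s n <> PhiInf A by case=> [[]].
have badN F Gs n m : s n = PhiN A m -> ~ NbI F Gs (s n) ->
    F (f n) \/ exists2 C, Gs C & C (f n).
  move=> snm; rewrite snm (fN _ _ snm) => /NbI_N H.
  have [Fm|Fm] := pselect (F m); first by left.
  right; apply: contrapT => H2; apply: H; split => // C GsC Cm.
  by apply: H2; exists C.
have badA F Gs n a : s n = PhiA a -> ~ NbI F Gs (s n) -> Gs (proj1_sig a).
  by move=> sna; rewrite sna => /NbI_A /contrapT.
case: (gl G Gl) => [AG|finG].
- pose c : {B : set nat | A B} := exist _ G AG.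
  pose BN := B2 `&` [set n | exists m, s n = PhiN A m].
  pose BA := B2 `&` [set n | exists a, s n = PhiA a].
  have sub : B2 `<=` BN `|` BA.
    move=> n B2n; case E: (s n) => [m|a|].
    + by left; split => //; exists m.
    + by right; split => //; exists a.
    + by exfalso; exact: B2I B2n E.
  have [IN|IA] := split_notI Iid IB2 sub.
  + exists BN; split => //; exists (PhiA c); apply: conv_basic => V bV Vc.
    have ftoN : finite_to_one_on BN f.
      by move=> k; apply: sub_finite_set (fto2 k) => n [[? ?] ?].
    case: (basic_A bV Vc) => [[F [fF ->]]|[F [Gs [fF fGs GsA -> nGs]]]].
    * apply: (fin_bad ftoN fF) => n [B2n [m snm]]; rewrite snm => /NbA_N nV.
      apply: contrapT => Fm; apply: nV; split; rewrite -(fN _ _ snm) //.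
      exact: B2G.
    * apply: (fin_bad (E := F `|` \bigcup_(C in Gs) (G `&` C)) ftoN).
        rewrite finite_setU; split => //; apply: bigcup_finite => // C GsC.
        apply: adA.2 => //; first exact: GsA.
        by move=> GC; apply: nGs; rewrite /= GC.
      move=> n [B2n [m snm]] /(badN _ _ _ _ snm) [Fn|[C GsC Cn]]; first by left.
      by right; exists C => //; split => //; exact: B2G.
  + pose B3 := BA `&` [set n | s n <> PhiA c].
    have IB3 : ~ I B3.
      have sub3 : BA `<=` B3 `|` s @^-1` [set PhiA c].
        by move=> n BAn; have [sn|sn] := pselect (s n = PhiA c); [right|left].
      have [//|] := split_notI Iid IA sub3.
      by move=> H; exfalso; apply: H; exact: fibI.
    have fto3 : finite_to_one_on B3 f.
      by move=> k; apply: sub_finite_set (fto2 k) => n [[[? ?] ?] ?].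
    exists B3; split => //; exists (PhiInf A); apply: conv_basic => V bV VI.
    have [F [Gs [fF fGs GsA ->]]] := basic_I bV VI.
    apply: (fin_bad (E := \bigcup_(C in Gs `&` [set C | C <> G]) (G `&` C)) fto3).
      apply: bigcup_finite; first exact: (sub_finite_set _ fGs) => C [].
      move=> C [GsC CG]; apply: adA.2 => //; first exact: GsA.
      by move=> GC; apply: CG.
    move=> n [[B2n [a sna]] snc] /(badA _ _ _ _ sna) Gsa.
    exists (proj1_sig a); first split => //.
      by move=> aG; apply: snc; rewrite sna; congr PhiA; apply: sig_eqP.
    by split; [exact: B2G|exact: fA sna].
- exists B2; split => //; exists (PhiInf A); apply: conv_basic => V bV VI.
  have [F [Gs [fF fGs GsA ->]]] := basic_I bV VI.
  apply: (fin_bad (E := F `|` \bigcup_(C in Gs) (G `&` C)) fto2).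
    rewrite finite_setU; split => //; apply: bigcup_finite => // C GsC.
    exact: finG (GsA _ GsC).
  move=> n B2n; case E: (s n) => [m|a|]; rewrite -E.
  + move=> /(badN _ _ _ _ E) [Fn|[C GsC Cn]]; first by left.
    by right; exists C => //; split => //; exact: B2G.
  + move=> /(badA _ _ _ _ E) Gsa; right; exists (proj1_sig a) => //.
    by split; [exact: B2G|exact: fA E].
  + by exfalso; exact: B2I B2n E.
Qed.
End S.

Unset Implicit Arguments.
Theorem proposition5p2 (X : countType) (A : set (set nat)) (I : set (set X)) :
  infinite_set [set: X] ->
  almost_disjoint A -> ~ countable A ->
  ideal I ->
  (FinBW I (Phi A) <->
   (forall f : X -> nat, D_ideal I f ->
      exists B : set X, ~ I B /\ finite_to_one_on B f /\ Fin2 A (f @` B))).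
Proof.
move=> _ adA _ Iid; split.
- exact: a_to_b.
- exact: b_to_a.
Qed.
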